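(* If a semigroup $\langle A;\cdot\rangle$ is an inflation of a subsemigroup which is a rectangular band of periodic commutative groups, and the product of any two idempotents of $A$ is an idempotent, then $\langle A;\cdot\rangle$ is a Hamiltonian algebra.
   Context: A semigroup $\langle T;\cdot\rangle$ is a rectangular band of semigroups $T_{i\lambda}$ if $\{T_{i\lambda}\mid i\in I,\lambda\in\Lambda\}$ is a partition of $T$ into subsemigroups with $T_{i\lambda}\cdot T_{j\mu}\subseteq T_{i\mu}$ for all $i,j\in I$, $\lambda,\mu\in\Lambda$; it is a rectangular band of periodic commutative groups if each $\langle T_{i\lambda};\cdot\rangle$ is a commutative group all of whose elements have finite order. A semigroup $\langle A;\cdot\rangle$ is an inflation of a subsemigroup $\langle B;\cdot\rangle$ if there is a partition $\{X_b\mid b\in B\}$ of $A$ with $b\in X_b$ and $x\cdot y=a\cdot b$ for all $a,b\in B$, $x\in X_a$, $y\in X_b$. An idempotent is $e$ with $ee=e$. Subalgebras of a semigroup are its nonempty subsets closed under $\cdot$; an algebra is called Hamiltonian if the universe of every subalgebra is an equivalence class (block) of some congruence of the algebra. *)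

(* Defs.v *)
From Stdlib Require Import Arith.

Section SG.
Context {A : Type} (op : A -> A -> A).

Definition associative_op : Prop :=
  forall x y z, op x (op y z) = op (op x y) z.

(* spow x n = x^(n+1) *)
Fixpoint spow (x : A) (n : nat) : A :=
  match n with 0 => x | S k => op (spow x k) x end.

Definition idempotent (e : A) : Prop := op e e = e.

Definition subalgebra (S : A -> Prop) : Prop :=
  (exists x, S x) /\ (forall x y, S x -> S y -> S (op x y)).

Definition congruence (R : A -> A -> Prop) : Prop :=
  (forall x, R x x) /\ (forall x y, R x y -> R y x) /\
  (forall x y z, R x y -> R y z -> R x z) /\
  (forall x x' y y', R x x' -> R y y' -> R (op x y) (op x' y')).

Definition hamiltonian : Prop :=
  forall S, subalgebra S ->
    exists R, congruence R /\ exists a, forall x, S x <-> R a x.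

Definition periodic_comm_group (T : A -> Prop) : Prop :=
  (forall x y, T x -> T y -> T (op x y)) /\
  exists e, T e /\
    (forall x, T x -> op e x = x /\ op x e = x) /\
    (forall x, T x -> exists y, T y /\ op x y = e /\ op y x = e) /\
    (forall x y, T x -> T y -> op x y = op y x) /\
    (forall x, T x -> exists n, spow x n = e).

(* B (a subsemigroup of A) is a rectangular band of periodic commutative
   groups: B is partitioned into the blocks
   T_{i,l} = {x in B | fi x = i /\ fl x = l} (the nonempty fibres of (fi,fl)),
   with T_{i,l} T_{j,m} ⊆ T_{i,m}, each block a periodic commutative group. *)
Definition rect_band_pcg (B : A -> Prop) : Prop :=
  exists (I L : Type) (fi : A -> I) (fl : A -> L),
    (forall x y, B x -> B y -> fi (op x y) = fi x /\ fl (op x y) = fl y) /\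
    (forall x, B x ->
       periodic_comm_group (fun y => B y /\ fi y = fi x /\ fl y = fl x)).

(* A is an inflation of the subsemigroup B: the partition {X_b | b in B}
   with b in X_b is encoded by the map r with X_b = r^{-1}(b). *)
Definition inflation_of (B : A -> Prop) : Prop :=
  (forall x y, B x -> B y -> B (op x y)) /\
  exists r : A -> A,
    (forall x, B (r x)) /\ (forall b, B b -> r b = b) /\
    (forall x y, op x y = op (r x) (r y)).

End SG.

(* Main.v *)
Require Import Defs.

Section H.
Variables (A : Type) (op : A -> A -> A) (B : A -> Prop) (r : A -> A)
  (I L : Type) (fi : A -> I) (fl : A -> L).
Local Notation "x ** y" := (op x y) (at level 40, left associativity).
Hypothesis assoc : forall x y z, x ** (y ** z) = (x ** y) ** z.
Hypothesis Bcl : forall x y, B x -> B y -> B (x ** y).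
Hypothesis rB : forall x, B (r x).
Hypothesis rid : forall b, B b -> r b = b.
Hypothesis rop : forall x y, x ** y = r x ** r y.
Hypothesis blk : forall x y, B x -> B y -> fi (x ** y) = fi x /\ fl (x ** y) = fl y.
Hypothesis grp : forall x, B x ->
  periodic_comm_group op (fun y => B y /\ fi y = fi x /\ fl y = fl x).
Hypothesis idm : forall e f, idempotent op e -> idempotent op f -> idempotent op (e ** f).

Lemma fiM x y : B x -> B y -> fi (x ** y) = fi x.
Proof. intros; apply blk; auto. Qed.
Lemma flM x y : B x -> B y -> fl (x ** y) = fl y.
Proof. intros; apply blk; auto. Qed.

Definition eid (b e : A) : Prop := B e /\ fi e = fi b /\ fl e = fl b /\ e ** e = e.

Lemma ID b : B b -> exists e, eid b e /\
  (forall y, B y -> fi y = fi b -> fl y = fl b -> e ** y = y /\ y ** e = y).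
Proof.
  intros Hb. destruct (grp b Hb) as [_ [e [[He1 [He2 He3]] [Hid _]]]].
  exists e. split; [|intros y Hy H1 H2; apply Hid; auto].
  repeat split; auto. apply Hid; auto.
Qed.

Lemma uniq b e : B b -> eid b e ->
  forall y, B y -> fi y = fi b -> fl y = fl b -> e ** y = y /\ y ** e = y.
Proof.
  intros Hb [He1 [He2 [He3 He4]]].
  destruct (grp b Hb) as [_ [e0 [[H01 [H02 H03]] [Hid [Hinv _]]]]].
  assert (e = e0).
  { destruct (Hinv e (conj He1 (conj He2 He3))) as [w [[Hw1 [Hw2 Hw3]] [Hw4 _]]].
    destruct (Hid e (conj He1 (conj He2 He3))) as [_ Hr].
    transitivity (e ** e0); [symmetry; exact Hr|].
    rewrite <- Hw4 at 1. rewrite assoc, He4. exact Hw4. }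
  subst. intros y Hy H1 H2. apply Hid. auto.
Qed.

Lemma eid_eq b e f : B b -> eid b e -> eid b f -> e = f.
Proof.
  intros Hb He Hf. pose proof He as [H1 [H2 [H3 H4]]].
  destruct (uniq b f Hb Hf e H1 H2 H3) as [_ Hr].
  destruct Hf as [G1 [G2 [G3 G4]]].
  destruct (uniq b e Hb He f G1 G2 G3) as [Hl _].
  congruence.
Qed.

Lemma K a f b : B a -> B b -> B f -> f ** f = f -> a ** f ** b = a ** b.
Proof.
  intros Ha Hb Hf Hff.
  destruct (ID a Ha) as [ea [[Ea1 [Ea2 [Ea3 Ea4]]] Ia]].
  destruct (ID b Hb) as [eb [[Eb1 [Eb2 [Eb3 Eb4]]] Ib]].
  assert (Hx : ea ** f ** eb = ea ** eb).
  { assert (Bab : B (ea ** eb)) by auto.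
    assert (Iab : (ea ** eb) ** (ea ** eb) = ea ** eb) by (apply idm; auto).
    apply (eid_eq (ea ** eb)); auto.
    - split; [|split; [|split]].
      + auto.
      + rewrite !fiM; auto.
      + rewrite !flM; auto.
      + apply idm; [apply idm|]; auto.
    - split; [|split; [|split]]; auto. }
  destruct (Ia a) as [_ Ha1]; auto.
  destruct (Ib b) as [Hb1 _]; auto.
  transitivity ((a ** ea) ** f ** (eb ** b)); [rewrite Ha1, Hb1; reflexivity|].
  transitivity (a ** (ea ** f ** eb) ** b); [rewrite !assoc; reflexivity|].
  rewrite Hx, assoc, Ha1, <- assoc, Hb1. reflexivity.
Qed.

Lemma SW a b c ec : B a -> B b -> B c -> eid c ec -> a ** b ** c = a ** c ** b ** ec.
Proof.
  intros Ha Hb Hc Hec.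
  pose proof Hec as [E1 [E2 [E3 E4]]].
  destruct (grp c Hc) as [_ [e0 [_ [_ [_ [Hcomm _]]]]]].
  destruct (uniq c ec Hc Hec c Hc eq_refl eq_refl) as [Hl Hr].
  assert (Bb : B (ec ** b ** ec)) by auto.
  assert (Hcm : c ** (ec ** b ** ec) = (ec ** b ** ec) ** c).
  { apply Hcomm; split; auto. split; [rewrite !fiM|rewrite !flM]; auto. }
  assert (E : c ** b ** ec = ec ** b ** c).
  { replace (c ** b ** ec) with (c ** (ec ** b ** ec)) by (rewrite !assoc, Hr; reflexivity).
    rewrite Hcm. rewrite <- (assoc (ec ** b)), Hl. reflexivity. }
  replace (a ** c ** b ** ec) with (a ** (c ** b ** ec)) by (rewrite !assoc; reflexivity).
  rewrite E, !assoc, (K a ec b); auto.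
Qed.

Lemma spow_P (P : A -> Prop) : (forall x y, P x -> P y -> P (x ** y)) ->
  forall b n, P b -> P (spow op b n).
Proof. intros HP b n Hb; induction n; simpl; auto. Qed.

Lemma spow_blk b n : B b -> B (spow op b n) /\ fi (spow op b n) = fi b /\ fl (spow op b n) = fl b.
Proof.
  intros Hb; induction n as [|n [IH1 [IH2 IH3]]]; simpl; auto.
  split; auto. rewrite fiM, flM; auto.
Qed.

Lemma inv_S (S : A -> Prop) : (forall x y, S x -> S y -> S (x ** y)) ->
  forall b, S b -> B b -> exists w e, S w /\ B w /\ fi w = fi b /\ fl w = fl b /\
    eid b e /\ S e /\ b ** w = e /\ w ** b = e.
Proof.
  intros Scl b Sb Hb.
  destruct (grp b Hb) as [_ [e [[He1 [He2 He3]] [Hid [_ [Hcomm Hper]]]]]].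
  destruct (Hper b (conj Hb (conj eq_refl eq_refl))) as [n Hn].
  assert (Se : S e) by (rewrite <- Hn; apply spow_P; auto).
  assert (Ee : eid b e).
  { split; [|split; [|split]]; auto. apply Hid; auto. }
  destruct n as [|k].
  - simpl in Hn. subst. exists e, e. pose proof Ee as [_ [_ [_ E4]]].
    repeat split; auto.
  - simpl in Hn. destruct (spow_blk b k Hb) as [P1 [P2 P3]].
    exists (spow op b k), e.
    split; [apply spow_P; auto|].
    split; [auto|]. split; [auto|]. split; [auto|]. split; [auto|]. split; [auto|].
    split; [|exact Hn]. rewrite Hcomm; auto.
Qed.

Lemma rS (S : A -> Prop) : (forall x y, S x -> S y -> S (x ** y)) ->
  forall x, S x -> S (r x).
Proof.
  intros Scl x Sx.
  assert (Bxx : B (x ** x)) by (rewrite rop; auto).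
  destruct (inv_S S Scl (x ** x) (Scl _ _ Sx Sx) Bxx) as [w [e [_ [_ [_ [_ [Ee [Se _]]]]]]]].
  pose proof Ee as [E1 _].
  assert (H1 : fi (r x) = fi (x ** x)) by (rewrite rop, fiM; auto).
  assert (H2 : fl (r x) = fl (x ** x)) by (rewrite rop, flM; auto).
  destruct (uniq _ e Bxx Ee (r x) (rB x) H1 H2) as [_ Hr].
  rewrite <- Hr, <- (rid e E1), <- rop. auto.
Qed.

Definition ctx (u v : option A) (x : A) : A :=
  match u, v with
  | None, None => x
  | Some u, None => u ** x
  | None, Some v => x ** v
  | Some u, Some v => u ** x ** v
  end.

Lemma mainL (S : A -> Prop) : (forall x y, S x -> S y -> S (x ** y)) ->
  forall x y u v, S x -> S y -> S (ctx u v x) -> S (ctx u v y).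
Proof.
  intros Scl x y u v Sx Sy Hc.
  assert (Sxh : S (r x)) by (apply rS; auto).
  assert (Syh : S (r y)) by (apply rS; auto).
  destruct (inv_S S Scl (r x) Sxh (rB x)) as [w [ex [Sw [Bw [Fw1 [Fw2 [Eex [Sex [Hxw Hwx]]]]]]]]].
  pose proof Eex as [X1 [_ [_ X4]]].
  assert (St : S (w ** r y)) by auto.
  destruct u as [u|], v as [v|]; simpl in *; auto.
  -
    assert (BP : B (u ** x ** v)) by (rewrite rop; auto).
    assert (HP : u ** x ** v = r u ** r x ** r v).
    { rewrite (rop (u ** x) v), (rid (u ** x)); [rewrite (rop u x); reflexivity|].
      rewrite rop; auto. }
    assert (HQ : u ** y ** v = r u ** r y ** r v).
    { rewrite (rop (u ** y) v), (rid (u ** y)); [rewrite (rop u y); reflexivity|].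
      rewrite rop; auto. }
    destruct (inv_S S Scl _ Hc BP) as [w' [eP [_ [_ [_ [_ [EeP [SeP _]]]]]]]].
    destruct (ID (w ** r y)) as [et [Eet _]]; auto.
    assert (Sw' : (u ** x ** v) ** (w ** r y) = (u ** y ** v) ** et).
    { rewrite HP, HQ, (SW (r u ** r x) (r v) (w ** r y) et); auto.
      rewrite !assoc. rewrite <- (assoc (r u) (r x) w), Hxw, (K (r u) ex (r y)); auto. }
    assert (HQe : (u ** y ** v) ** et ** eP = u ** y ** v).
    { pose proof Eet as [T1 [T2 [T3 T4]]]. pose proof EeP as [P1 [P2 [P3 P4]]].
      assert (BQ : B (u ** y ** v)) by (rewrite rop; auto).
      rewrite K; auto.
      apply (uniq (u ** x ** v) eP BP EeP); auto.
      + rewrite HP, HQ, !fiM; auto.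
      + rewrite HP, HQ, !flM; auto. }
    rewrite <- HQe, <- Sw'. auto.
  -
    rewrite rop in Hc |- *.
    replace (r u ** r y) with (r u ** r x ** (w ** r y)); auto.
    rewrite assoc, <- (assoc (r u) (r x) w), Hxw, (K (r u) ex (r y)); auto.
  -
    rewrite rop in Hc |- *.
    replace (r y ** r v) with ((r y ** w) ** (r x ** r v)); auto.
    rewrite assoc, <- (assoc (r y) w (r x)), Hwx, (K (r y) ex (r v)); auto.
Qed.

Lemma ctx_r u v x y : ctx u v (x ** y) =
  ctx u (Some (match v with None => y | Some v => y ** v end)) x.
Proof. destruct u, v; simpl; rewrite ?assoc; reflexivity. Qed.

Lemma ctx_l u v x y : ctx u v (x ** y) =
  ctx (Some (match u with None => x | Some u => u ** x end)) v y.
Proof. destruct u, v; simpl; rewrite ?assoc; reflexivity. Qed.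
End H.

Theorem mainTheorem18 (A : Type) (op : A -> A -> A) (B : A -> Prop) :
  associative_op op ->
  inflation_of op B ->
  rect_band_pcg op B ->
  (forall e f, idempotent op e -> idempotent op f -> idempotent op (op e f)) ->
  hamiltonian op.
Proof.
  intros Hassoc [Bcl [r [rB [rid rop]]]] [I [L [fi [fl [blk grp]]]]] idm S [[s0 Ss0] Scl].
  pose proof (mainL A op B r I L fi fl Hassoc Bcl rB rid rop blk grp idm S Scl) as ML.
  exists (fun a b => forall u v, S (ctx A op u v a) <-> S (ctx A op u v b)).
  split.
  - split; [|split; [|split]].
    + intros; tauto.
    + intros x y H u v; symmetry; apply H.
    + intros x y z H1 H2 u v; rewrite H1; apply H2.
    + intros x x' y y' Hx Hy u v.
      transitivity (S (ctx A op u v (op x' y))).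
      * rewrite !(ctx_r A op Hassoc); apply Hx.
      * rewrite !(ctx_l A op Hassoc); apply Hy.
  - exists s0. intros x; split.
    + intros Sx u v; split; apply ML; auto.
    + intros H. exact (proj1 (H None None) Ss0).
Qed.
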